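(* Let $\mathcal E$ be an exact category and $\Phi:\operatorname{Serre}(\mathcal E)\to\operatorname{MSpec}\mathsf M(\mathcal E)$, $\Phi(\mathcal S)=\mathsf M(\mathcal E)\setminus\mathsf M_{\mathcal S}$ where $\mathsf M_{\mathcal S}=\{[X]\mid X\in\mathcal S\}$. Then: (1) $\Phi$ is a homeomorphism for the Zariski topologies; (2) the sets $U_X=\{\mathcal S\in\operatorname{Serre}(\mathcal E)\mid X\in\mathcal S\}$, $X\in\mathcal E$, form an open basis of $\operatorname{Serre}(\mathcal E)$; (3) for $\mathcal S,\mathcal T\in\operatorname{Serre}(\mathcal E)$, $\mathcal S$ lies in the closure of $\{\mathcal T\}$ if and only if $\mathcal S\subseteq\mathcal T$, i.e. the specialization order on $\operatorname{Serre}(\mathcal E)$ is inclusion.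
   Context: An exact category $\mathcal E$ is an additive full subcategory of an abelian category closed under extensions; conflations are short exact sequences with all terms in $\mathcal E$. The Grothendieck monoid $\mathsf M(\mathcal E)$ is the commutative monoid with a map $X\mapsto[X]$ on isomorphism classes with $[0]=0$ and $[Y]=[X]+[Z]$ for each conflation $0\to X\to Y\to Z\to 0$, universal among such maps. A Serre subcategory is a full additive subcategory $\mathcal S$ closed under isomorphisms such that for each conflation, $Y\in\mathcal S$ iff $X,Z\in\mathcal S$. A prime ideal of a monoid $M$ is a subset $\mathfrak p\ne M$ with $x+a\in\mathfrak p$ for $x\in\mathfrak p$, $a\in M$, and $x+y\in\mathfrak p\Rightarrow x\in\mathfrak p$ or $y\in\mathfrak p$. Zariski topology on $\operatorname{MSpec}M$: closed sets $V(S)=\{\mathfrak p\mid\mathfrak p\supseteq S\}$, $S\subseteq M$. Zariski topology on $\operatorname{Serre}(\mathcal E)$: closed sets $V(\mathcal X)=\{\mathcal S\mid\mathcal S\cap\mathcal X=\emptyset\}$ for subcategories (classes of objects closed under isomorphism) $\mathcal X\subseteq\mathcal E$. *)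

(* Defs.v *)
From HB Require Import structures.
From mathcomp Require Import all_boot all_algebra.

Set Implicit Arguments.
Unset Strict Implicit.
Unset Printing Implicit Defensive.

Local Open Scope ring_scope.

Record PreAdd := {
  Ob : Type;
  Hom : Ob -> Ob -> zmodType;
  comp : forall X Y Z : Ob, Hom Y Z -> Hom X Y -> Hom X Z;
  idm : forall X : Ob, Hom X X;
  compA : forall X Y Z W (h : Hom Z W) (g : Hom Y Z) (f : Hom X Y),
      comp h (comp g f) = comp (comp h g) f;
  comp1f : forall X Y (f : Hom X Y), comp (idm Y) f = f;
  compf1 : forall X Y (f : Hom X Y), comp f (idm X) = f;
  compDl : forall X Y Z (g1 g2 : Hom Y Z) (f : Hom X Y),
      comp (g1 + g2) f = comp g1 f + comp g2 f;
  compDr : forall X Y Z (g : Hom Y Z) (f1 f2 : Hom X Y),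
      comp g (f1 + f2) = comp g f1 + comp g f2
}.

Arguments comp {p X Y Z}.
Arguments idm {p}.

Section CatDefs.
Context {A : PreAdd}.

Definition is_zero_obj (Z : Ob A) : Prop :=
  forall Y : Ob A, (forall f : Hom Z Y, f = 0) /\ (forall g : Hom Y Z, g = 0).

Definition is_mono {X Y : Ob A} (f : Hom X Y) : Prop :=
  forall W (g h : Hom W X), comp f g = comp f h -> g = h.

Definition is_epi {X Y : Ob A} (f : Hom X Y) : Prop :=
  forall W (g h : Hom Y W), comp g f = comp h f -> g = h.

Definition is_kernel {K X Y : Ob A} (k : Hom K X) (f : Hom X Y) : Prop :=
  comp f k = 0 /\
  forall W (h : Hom W X), comp f h = 0 ->
    exists u : Hom W K, comp k u = h /\ forall u' : Hom W K, comp k u' = h -> u' = u.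

Definition is_cokernel {X Y C : Ob A} (c : Hom Y C) (f : Hom X Y) : Prop :=
  comp c f = 0 /\
  forall W (h : Hom Y W), comp h f = 0 ->
    exists u : Hom C W, comp u c = h /\ forall u' : Hom C W, comp u' c = h -> u' = u.

Definition is_biprod (X Y S : Ob A) (i1 : Hom X S) (i2 : Hom Y S)
    (p1 : Hom S X) (p2 : Hom S Y) : Prop :=
  [/\ comp p1 i1 = idm X, comp p2 i2 = idm Y, comp p1 i2 = 0, comp p2 i1 = 0
    & comp i1 p1 + comp i2 p2 = idm S].

Definition iso (X Y : Ob A) : Prop :=
  exists (f : Hom X Y) (g : Hom Y X), comp g f = idm X /\ comp f g = idm Y.

Definition short_exact {X Y Z : Ob A} (f : Hom X Y) (g : Hom Y Z) : Prop :=
  is_kernel f g /\ is_cokernel g f.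

End CatDefs.

Definition is_abelian (A : PreAdd) : Prop :=
  (exists Z : Ob A, is_zero_obj Z) /\
  [/\ forall X Y : Ob A, exists (S : Ob A) (i1 : Hom X S) (i2 : Hom Y S)
         (p1 : Hom S X) (p2 : Hom S Y), is_biprod i1 i2 p1 p2,
      forall (X Y : Ob A) (f : Hom X Y), exists (K : Ob A) (k : Hom K X), is_kernel k f,
      forall (X Y : Ob A) (f : Hom X Y), exists (C : Ob A) (c : Hom Y C), is_cokernel c f,
      forall (X Y : Ob A) (f : Hom X Y), is_mono f ->
         exists (Z : Ob A) (g : Hom Y Z), is_kernel f g
    & forall (X Y : Ob A) (f : Hom X Y), is_epi f ->
         exists (W : Ob A) (h : Hom W X), is_cokernel f h].

Section ExactDefs.
Context {A : PreAdd}.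

Definition additive_sub (S : Ob A -> Prop) : Prop :=
  (exists Z, is_zero_obj Z /\ S Z) /\
  (forall (X Y B : Ob A) (i1 : Hom X B) (i2 : Hom Y B) (p1 : Hom B X) (p2 : Hom B Y),
      is_biprod i1 i2 p1 p2 -> S X -> S Y -> S B).

Definition ext_closed (S : Ob A -> Prop) : Prop :=
  forall (X Y Z : Ob A) (f : Hom X Y) (g : Hom Y Z), short_exact f g -> S X -> S Z -> S Y.

(* exact category = additive full subcategory of the abelian category A
   closed under extensions *)
Definition exact_cat (E : Ob A -> Prop) : Prop := additive_sub E /\ ext_closed E.

Definition conflation (E : Ob A -> Prop) (X Y Z : Ob A) : Prop :=
  [/\ E X, E Y, E Z & exists (f : Hom X Y) (g : Hom Y Z), short_exact f g].

Definition additive_map (E : Ob A -> Prop) (N : nmodType) (n : Ob A -> N) : Prop :=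
  [/\ forall Z, E Z -> is_zero_obj Z -> n Z = 0,
      forall X Y, E X -> E Y -> iso X Y -> n X = n Y
    & forall X Y Z, conflation E X Y Z -> n Y = n X + n Z].

Definition monoid_morph (M N : nmodType) (phi : M -> N) : Prop :=
  phi 0 = 0 /\ forall a b, phi (a + b) = phi a + phi b.

Definition is_groth (E : Ob A -> Prop) (M : nmodType) (m : Ob A -> M) : Prop :=
  additive_map E m /\
  forall (N : nmodType) (n : Ob A -> N), additive_map E n ->
    exists phi : M -> N,
      [/\ monoid_morph phi, (forall X, E X -> phi (m X) = n X)
        & forall psi : M -> N, monoid_morph psi -> (forall X, E X -> psi (m X) = n X) ->
            forall a, psi a = phi a].

Definition is_serre (E : Ob A -> Prop) (S : Ob A -> Prop) : Prop :=
  [/\ forall X, S X -> E X,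
      additive_sub S,
      forall X Y, S X -> iso X Y -> S Y
    & forall X Y Z, conflation E X Y Z -> (S Y <-> S X /\ S Z)].

Definition is_subclass (E : Ob A -> Prop) (X : Ob A -> Prop) : Prop :=
  (forall Y, X Y -> E Y) /\ (forall Y Z, X Y -> iso Y Z -> X Z).

(* Zariski closed subsets of Serre(E): V(X) = {S | S cap X = empty};
   a subset is given by a predicate C, considered only on Serre subcategories *)
Definition serre_closed (E : Ob A -> Prop) (C : (Ob A -> Prop) -> Prop) : Prop :=
  exists X, is_subclass E X /\
    forall S, is_serre E S -> (C S <-> forall Y, S Y -> ~ X Y).

Definition serre_open (E : Ob A -> Prop) (O : (Ob A -> Prop) -> Prop) : Prop :=
  serre_closed E (fun S => ~ O S).

Definition in_closure (E : Ob A -> Prop) (S T : Ob A -> Prop) : Prop :=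
  forall C, serre_closed E C -> C T -> C S.

Definition Phi (M : nmodType) (m : Ob A -> M) (S : Ob A -> Prop) : M -> Prop :=
  fun a => ~ exists X, S X /\ m X = a.

End ExactDefs.

Definition is_prime (M : nmodType) (p : M -> Prop) : Prop :=
  [/\ exists a, ~ p a,
      forall x a, p x -> p (x + a)
    & forall x y, p (x + y) -> p x \/ p y].

Definition mspec_closed (M : nmodType) (C : (M -> Prop) -> Prop) : Prop :=
  exists T : M -> Prop, forall p, is_prime p -> (C p <-> forall a, T a -> p a).

(* f restricts to a homeomorphism from the subspace P (closed sets clT)
   onto the subspace Q (closed sets clU) *)
Definition homeo_on {T U : Type} (P : T -> Prop) (Q : U -> Prop)
    (clT : (T -> Prop) -> Prop) (clU : (U -> Prop) -> Prop) (f : T -> U) : Prop :=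
  [/\ forall x, P x -> Q (f x),
      forall x y, P x -> P y -> f x = f y -> x = y,
      forall y, Q y -> exists x, P x /\ f x = y,
      forall C, clU C -> clT (fun x => C (f x))
    & forall C, clT C -> clU (fun y => exists x, [/\ P x, C x & f x = y])].

(* Main.v *)
Require Import Defs.
From mathcomp Require Import all_boot all_algebra.
From HB Require Import structures.
From Stdlib Require Import ClassicalEpsilon Classical FunctionalExtensionality PropExtensionality.
Set Implicit Arguments. Unset Strict Implicit. Unset Printing Implicit Defensive.
Import GRing.Theory.
Local Open Scope ring_scope.

Definition dec (P : Prop) : bool := if excluded_middle_informative P then true else false.
Lemma decPx (P : Prop) : reflect P (dec P).
Proof. rewrite /dec; case: excluded_middle_informative => h; constructor => //. Qed.

Definition bor : Type := bool.
HB.instance Definition _ := Choice.on bor.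
Lemma bor_addA : associative (orb : bor -> bor -> bor). Proof. exact: orbA. Qed.
Lemma bor_addC : commutative (orb : bor -> bor -> bor). Proof. exact: orbC. Qed.
Lemma bor_add0 : left_id (false : bor) orb. Proof. by []. Qed.
HB.instance Definition _ := GRing.isNmodule.Build bor bor_addA bor_addC bor_add0.

Record closedP (M : nmodType) := ClosedP {
  cpP :> pred M; cp0 : cpP 0; cpD : forall x y, cpP x -> cpP y -> cpP (x + y) }.
Definition subm (M : nmodType) (C : closedP M) : Type := {x : M | C x}.
HB.instance Definition _ M C := Choice.on (@subm M C).
HB.instance Definition _ M C := SubType.on (@subm M C).
Section SubM.
Context (M : nmodType) (C : closedP M).
Definition subm_add (x y : subm C) : subm C := exist _ (val x + val y) (cpD (valP x) (valP y)).
Definition subm0 : subm C := exist _ 0 (cp0 C).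
Lemma subm_addA : associative subm_add.
Proof. by move=> x y z; apply: val_inj; rewrite /= addrA. Qed.
Lemma subm_addC : commutative subm_add.
Proof. by move=> x y; apply: val_inj; rewrite /= addrC. Qed.
Lemma subm_add0 : left_id subm0 subm_add.
Proof. by move=> x; apply: val_inj; rewrite /= add0r. Qed.
End SubM.
HB.instance Definition _ M C := GRing.isNmodule.Build (@subm M C) (@subm_addA M C) (@subm_addC M C) (@subm_add0 M C).
Lemma val_subm_add M (C : closedP M) (x y : subm C) : val (x + y) = val x + val y. Proof. by []. Qed.
Lemma val_subm0 M (C : closedP M) : val (0 : subm C) = 0. Proof. by []. Qed.
Local Notation Hom := Defs.Hom.
Local Notation comp := (@Defs.comp _ _ _ _).
Section Cat.
Context {A : PreAdd}.

Lemma comp0f (X Y Z : Ob A) (f : Hom X Y) : comp (0 : Hom Y Z) f = 0.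
Proof.
have h := Defs.compDl (0 : Hom Y Z) 0 f; rewrite addr0 in h.
by apply/(addrI (comp (0 : Hom Y Z) f)); rewrite addr0 -h.
Qed.

Lemma compf0 (X Y Z : Ob A) (g : Hom Y Z) : comp g (0 : Hom X Y) = 0.
Proof.
have h := Defs.compDr g (0 : Hom X Y) 0; rewrite addr0 in h.
by apply/(addrI (comp g (0 : Hom X Y))); rewrite addr0 -h.
Qed.

Lemma zero_iso (Z Z' : Ob A) : is_zero_obj Z -> is_zero_obj Z' -> iso Z Z'.
Proof.
move=> hZ hZ'; exists 0, 0; split.
  by rewrite (proj1 (hZ Z) (comp _ _)) (proj1 (hZ Z) (idm Z)).
by rewrite (proj1 (hZ' Z') (comp _ _)) (proj1 (hZ' Z') (idm Z')).
Qed.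

Lemma iso_sym (X Y : Ob A) : iso X Y -> iso Y X.
Proof. by case=> f [g [h1 h2]]; exists g, f. Qed.

Lemma iso_ses (Z X Y : Ob A) (hZ : is_zero_obj Z) (g : Hom Y X) (gi : Hom X Y) :
  comp gi g = idm Y -> comp g gi = idm X -> short_exact (0 : Hom Z Y) g.
Proof.
move=> h1 h2; split; split; first exact: compf0.
- move=> W h hh; exists 0; split.
    rewrite comp0f -[h]Defs.comp1f -h1.
    rewrite -Defs.compA hh; by rewrite compf0.
  by move=> u' _; apply: (proj2 (hZ W)).
- exact: compf0.
- move=> W h _; exists (comp h gi); split.
    by rewrite -Defs.compA h1 Defs.compf1.
  by move=> u' <-; rewrite -Defs.compA h2 Defs.compf1.
Qed.

Lemma biprod_ses (X Y B : Ob A) (i1 : Hom X B) (i2 : Hom Y B) (p1 : Hom B X) (p2 : Hom B Y) :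
  is_biprod i1 i2 p1 p2 -> short_exact i1 p2.
Proof.
case=> e1 e2 e3 e4 e5; split; split => //.
- move=> W h hh; exists (comp p1 h); split.
    by rewrite -[h in RHS]Defs.comp1f -e5 Defs.compDl -!Defs.compA hh compf0 addr0 Defs.compA.
  by move=> u' <-; rewrite Defs.compA e1 Defs.comp1f.
- move=> W h hh; exists (comp h i2); split.
    by rewrite -[h in RHS]Defs.compf1 -e5 Defs.compDr !Defs.compA hh comp0f add0r.
  by move=> u' <-; rewrite -Defs.compA e2 Defs.compf1.
Qed.

Lemma E_iso (E : Ob A -> Prop) (X Y : Ob A) : exact_cat E -> E X -> iso X Y -> E Y.
Proof.
case=> [[[Z [hZ EZ]] _] hext] EX [f [g [h1 h2]]].
exact: (hext _ _ _ _ _ (iso_ses hZ h2 h1) EZ EX).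
Qed.

End Cat.
Section Main.
Context {A : PreAdd} (HA : is_abelian A) (E : Ob A -> Prop) (HE : exact_cat E)
  (M : nmodType) (m : Ob A -> M) (HM : is_groth E m).

Lemma m_add : additive_map E m.
Proof. exact: HM.1. Qed.

Lemma m_zero Z : is_zero_obj Z -> E Z -> m Z = 0.
Proof. by case: m_add => h _ _ hZ EZ; apply: h. Qed.

Lemma m_iso X Y : E X -> iso X Y -> E Y /\ m Y = m X.
Proof.
move=> EX hi; have EY := E_iso HE EX hi; split => //.
by case: m_add => _ h _; symmetry; apply: h.
Qed.

Lemma E_zero : exists Z, is_zero_obj Z /\ E Z.
Proof. by case: HE => [[h _] _]. Qed.

Lemma biprod_m X Y B (i1 : Hom X B) (i2 : Hom Y B) (p1 : Hom B X) (p2 : Hom B Y) :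
  is_biprod i1 i2 p1 p2 -> E X -> E Y -> [/\ E B, m B = m X + m Y & conflation E X B Y].
Proof.
move=> hb EX EY; have EB : E B by case: HE => [[_ h] _]; exact: h hb EX EY.
have hc : conflation E X B Y by split => //; exists i1, p2; exact: biprod_ses hb.
by split => //; case: m_add => _ _ h; apply: h.
Qed.

Lemma biprod_ex (X Y : Ob A) : exists B (i1 : Hom X B) (i2 : Hom Y B) (p1 : Hom B X) (p2 : Hom B Y),
  is_biprod i1 i2 p1 p2.
Proof. by case: HA => _ [h _ _ _ _]; apply: h. Qed.

Definition Pim (a : M) : bool := dec (exists X, E X /\ m X = a).

Lemma Pim0 : Pim 0.
Proof. rewrite /Pim; apply/decPx; case: E_zero => Z [hZ EZ]; exists Z; split => //; exact: m_zero. Qed.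

Lemma PimD x y : Pim x -> Pim y -> Pim (x + y).
Proof.
rewrite /Pim => /decPx [X [EX <-]] /decPx [Y [EY <-]]; apply/decPx.
case: (biprod_ex X Y) => B [i1 [i2 [p1 [p2 hb]]]].
by case: (biprod_m hb EX EY) => EB hm _; exists B.
Qed.

Definition Cim : closedP M := ClosedP Pim0 PimD.

Lemma m_surj a : exists X, E X /\ m X = a.
Proof.
pose n (X : Ob A) : subm Cim := insubd (0 : subm Cim) (m X).
have valn X : E X -> val (n X) = m X.
  by move=> EX; rewrite /n insubdK //; apply/decPx; exists X.
have hn : additive_map E n.
  split.
  - move=> Z EZ hZ; apply: val_inj; rewrite valn // m_zero //.
  - move=> X Y EX EY hi; rewrite /n; by case: (m_iso EX hi) => _ ->.
  - move=> X Y Z hc; apply: val_inj; rewrite val_subm_add.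
    case: (hc) => EX EY EZ _; rewrite !valn //.
    by case: m_add => _ _ h; apply: h.
case: HM => _ /(_ _ n hn) [phi [[phi0 phiD] phim _]].
case: HM => _ /(_ _ m m_add) [phi0' [_ _ uniq]].
have e1 : forall a, val (phi a) = phi0' a.
  apply: uniq; first split.
  - by rewrite phi0.
  - by move=> x y; rewrite phiD.
  move=> X EX; rewrite phim //; exact: (valn X EX).
have e2 : forall a, a = phi0' a.
  move=> b; exact: (uniq (fun x => x) (conj erefl (fun _ _ => erefl)) (fun _ _ => erefl) b).
have := valP (phi a); rewrite e1 -e2 => /decPx; done.
Qed.

Lemma serre_zero (S : Ob A -> Prop) (Z : Ob A) : is_serre E S -> is_zero_obj Z -> S Z.
Proof.
case=> _ [[Z1 [hZ1 SZ1]] _] hiso _ hZ; exact: hiso _ _ SZ1 (zero_iso hZ1 hZ).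
Qed.

Lemma KL (S : Ob A -> Prop) (X Y : Ob A) : is_serre E S -> E X -> E Y -> m X = m Y -> S X -> S Y.
Proof.
move=> hS EX EY hm SX.
pose n (Z : Ob A) : bor := ~~ dec (S Z).
have hn : additive_map E n.
  split.
  - move=> Z EZ hZ; rewrite /n; case: decPx => // h; exfalso; apply: h; exact: serre_zero hZ.
  - move=> Z W EZ EW hi; rewrite /n.
    case: hS => _ _ hiso _.
    case: decPx => h1; case: decPx => h2 //; exfalso.
    + by apply: h2; apply: hiso h1 hi.
    + by apply: h1; apply: hiso h2 (iso_sym hi).
  - move=> Z W V hc; rewrite /n.
    case: hS => _ _ _ /(_ _ _ _ hc) hh.
    by case: decPx => h1; case: decPx => h2; case: decPx => h3 //; exfalso; tauto.
case: HM => _ /(_ _ n hn) [phi [_ phim _]].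
have : n X = n Y by rewrite -phim // -phim // hm.
rewrite /n; case: decPx => // _; case: decPx => //.
Qed.

Definition Sp (p : M -> Prop) (X : Ob A) : Prop := E X /\ ~ p (m X).

Lemma prime_not0 (p : M -> Prop) : is_prime p -> ~ p 0.
Proof. by case=> [[a na] hid _] p0; apply: na; rewrite -[a]add0r; apply: hid. Qed.

Lemma prime_add (p : M -> Prop) (x y : M) : is_prime p -> (~ p (x + y) <-> ~ p x /\ ~ p y).
Proof.
case=> _ hid hpr; split.
  move=> h; split => hx; apply: h; first exact: hid.
  by rewrite addrC; apply: hid.
by case=> h1 h2 /hpr [].
Qed.

Lemma Sp_serre (p : M -> Prop) : is_prime p -> is_serre E (Sp p).
Proof.
move=> hp; split.
- by move=> X [].
- split.
    case: E_zero => Z [hZ EZ]; exists Z; split => //; split => //.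
    by rewrite m_zero //; exact: prime_not0.
  move=> X Y B i1 i2 p1 p2 hb [EX nX] [EY nY].
  case: (biprod_m hb EX EY) => EB hB _; split => //; rewrite hB.
  by apply/(prime_add _ _ hp).
- move=> X Y [EX nX] hi; case: (m_iso EX hi) => EY hY; split => //; by rewrite hY.
- move=> X Y Z hc; case: (hc) => EX EY EZ _.
  have hm : m Y = m X + m Z by case: m_add => _ _ h; apply: h.
  rewrite /Sp hm (prime_add _ _ hp); tauto.
Qed.

Lemma Phi_Sp (p : M -> Prop) : is_prime p -> Phi m (Sp p) = p.
Proof.
move=> hp; apply: functional_extensionality => a; apply: propositional_extensionality.
split.
  move=> h; apply: NNPP => na; apply: h.
  case: (m_surj a) => X [EX hX]; exists X; split => //; split => //; by rewrite hX.
by move=> pa [X [[EX nX] hX]]; apply: nX; rewrite hX.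
Qed.

Lemma Phi_prime (S : Ob A -> Prop) : is_serre E S -> is_prime (Phi m S).
Proof.
move=> hS; have hS' := hS; case: hS' => hSE [_ hSb] hiso hconf; split.
- case: E_zero => Z [hZ EZ]; exists (m Z) => h; apply: h; exists Z; split => //.
  exact: serre_zero hZ.
- move=> x a hx [Y [SY hY]]; apply: hx.
  case: (m_surj x) => X [EX ex]; case: (m_surj a) => W [EW ea].
  case: (biprod_ex X W) => B [i1 [i2 [p1 [p2 hb]]]].
  case: (biprod_m hb EX EW) => EB hB hc.
  have SB : S B by apply: (KL hS (hSE _ SY) EB _ SY); rewrite hY hB ex ea.
  by exists X; split => //; move: (proj1 (hconf _ _ _ hc) SB) => [].
- move=> x y h; apply: NNPP => hn.
  have [hx hy] : ~ Phi m S x /\ ~ Phi m S y by tauto.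
  move/NNPP: hx => [X [SX ex]]; move/NNPP: hy => [W [SW ey]].
  case: (biprod_ex X W) => B [i1 [i2 [p1 [p2 hb]]]].
  case: (biprod_m hb (hSE _ SX) (hSE _ SW)) => EB hB hc.
  apply: h; exists B; split; first exact: hSb _ _ _ _ _ _ _ hb SX SW.
  by rewrite hB ex ey.
Qed.

Lemma Phi_inj (S T : Ob A -> Prop) : is_serre E S -> is_serre E T -> Phi m S = Phi m T -> S = T.
Proof.
move=> hS hT he.
have sub : forall S T, is_serre E S -> is_serre E T -> Phi m S = Phi m T ->
    forall X, S X -> T X.
  move=> S' T' hS' hT' he' X SX.
  have EX : E X by case: hS' => h _ _ _; exact: h.
  have : ~ Phi m T' (m X) by rewrite -he' => h; apply: h; exists X.
  move/NNPP => [Y [TY hY]].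
  have EY : E Y by case: hT' => h _ _ _; exact: h.
  exact: KL hT' EY EX hY TY.
apply: functional_extensionality => X; apply: propositional_extensionality.
by split; apply: sub.
Qed.


Lemma serreE (S : Ob A -> Prop) X : is_serre E S -> S X -> E X.
Proof. by case=> h _ _ _; apply: h. Qed.

Lemma U_open (X : Ob A) : E X -> serre_open E (fun S => S X).
Proof.
move=> EX; exists (fun Y => E Y /\ m Y = m X); split.
  split; first by move=> Y [].
  by move=> Y Z [EY hY] hi; case: (m_iso EY hi) => EZ ->; split.
move=> S hS; split.
  by move=> nSX Y SY [EY hY]; apply: nSX; exact: KL hS EY EX hY SY.
by move=> h SX; exact: h X SX (conj EX erefl).
Qed.

Lemma main_sec :
  homeo_on (is_serre E) (@is_prime M) (serre_closed E) (@mspec_closed M) (Phi m)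
  /\ ((forall X, E X -> serre_open E (fun S => S X))
      /\ (forall O, serre_open E O -> forall S, is_serre E S -> O S ->
            exists X, [/\ E X, S X & forall T, is_serre E T -> T X -> O T]))
  /\ (forall S T, is_serre E S -> is_serre E T ->
        (in_closure E S T <-> (forall X, S X -> T X))).
Proof.
split; [split|split; [split|]].
- exact: Phi_prime.
- by move=> S T hS hT; exact: Phi_inj hS hT.
- by move=> p hp; exists (Sp p); split; [exact: Sp_serre | exact: Phi_Sp].
- move=> C [T hT]; exists (fun Y => E Y /\ T (m Y)); split.
    split; first by move=> Y [].
    by move=> Y Z [EY TY] hi; case: (m_iso EY hi) => EZ ->; split.
  move=> S hS; rewrite (hT _ (Phi_prime hS)); split.
    by move=> h Y SY [EY TY]; exact: (h _ TY) (ex_intro _ Y (conj SY erefl)).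
  move=> h a Ta [Y [SY hY]]; apply: (h _ SY); split; first exact: serreE hS SY.
  by rewrite hY.
- move=> C [X [[hXE hXiso] hX]]; exists (fun a => exists Y, X Y /\ m Y = a).
  move=> p hp; split.
    move=> [S [hS CS <-]] a [Y [XY hY]] [Z [SZ hZ]].
    apply: (proj1 (hX _ hS) CS Y _ XY).
    exact: (KL hS (serreE hS SZ) (hXE _ XY) (etrans hZ (esym hY)) SZ).
  move=> h; exists (Sp p); split; [exact: Sp_serre| |exact: Phi_Sp].
  apply/(hX _ (Sp_serre hp)) => Y [EY nY] XY; apply: nY; apply: h; by exists Y.
- exact: U_open.
- move=> O [X [[hXE _] hX]] S hS OS.
  have : ~ (forall Y, S Y -> ~ X Y) by move=> h; exact: (proj2 (hX _ hS) h).
  move=> h; apply: NNPP => hne; apply: h => Y SY XY; apply: hne; exists Y; split.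
  + exact: serreE hS SY.
  + exact: SY.
  + move=> T hT TY; apply: NNPP => nOT; exact: (proj1 (hX _ hT) nOT) Y TY XY.
- move=> S T hS hT; split.
    move=> hcl X SX; have EX := serreE hS SX; apply: NNPP => nTX.
    exact: (hcl _ (U_open EX) nTX) SX.
  move=> sub C [X [_ hX]] CT; apply/(hX _ hS) => Y SY.
  exact: (proj1 (hX _ hT) CT) Y (sub _ SY).
Qed.

End Main.

Theorem mainTheorem15 (A : PreAdd) (HA : is_abelian A) (E : Ob A -> Prop)
    (HE : exact_cat E) (M : nmodType) (m : Ob A -> M) (HM : is_groth E m) :
  (* (1) Phi is a homeomorphism Serre(E) -> MSpec M(E) *)
  homeo_on (is_serre E) (@is_prime M) (serre_closed E) (@mspec_closed M) (Phi m)
  (* (2) the U_X form an open basis *)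
  /\ ((forall X, E X -> serre_open E (fun S => S X))
      /\ (forall O, serre_open E O -> forall S, is_serre E S -> O S ->
            exists X, [/\ E X, S X & forall T, is_serre E T -> T X -> O T]))
  (* (3) specialization order is inclusion *)
  /\ (forall S T, is_serre E S -> is_serre E T ->
        (in_closure E S T <-> (forall X, S X -> T X))).
Proof. exact: (@main_sec A HA E HE M m HM). Qed.
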